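(* Let $A$ be a unital C*-algebra and $\varepsilon:A\to\mathbb{C}$ a character (nonzero multiplicative linear functional). Let $u$ be a non-zero bounded linear functional on $A$ such that $u(1)=0$ and $u(x^*x)\ge0$ for all $x\in A$ with $\varepsilon(x^*x)=0$. Then $u=r(v-\varepsilon)$ for some $r>0$ and some state $v$ on $A$. *)

(* Defs.v *)
From Stdlib Require Import Reals.
Open Scope R_scope.

Record Cplx : Type := mkC { re : R ; im : R }.

Definition C0 : Cplx := mkC 0 0.
Definition C1 : Cplx := mkC 1 0.
Definition RtoC (r : R) : Cplx := mkC r 0.
Definition Cadd (z w : Cplx) : Cplx := mkC (re z + re w) (im z + im w).
Definition Copp (z : Cplx) : Cplx := mkC (- re z) (- im z).
Definition Csub (z w : Cplx) : Cplx := Cadd z (Copp w).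
Definition Cmul (z w : Cplx) : Cplx :=
  mkC (re z * re w - im z * im w) (re z * im w + im z * re w).
Definition Cconj (z : Cplx) : Cplx := mkC (re z) (- im z).
Definition Cmod (z : Cplx) : R := sqrt (re z * re z + im z * im z).
Definition Cnonneg (z : Cplx) : Prop := im z = 0 /\ 0 <= re z.

Record CstarAlg : Type := {
  car :> Type;
  add : car -> car -> car;
  zero : car;
  opp : car -> car;
  smul : Cplx -> car -> car;
  mul : car -> car -> car;
  one : car;
  star : car -> car;
  norm : car -> R;
  add_assoc : forall x y z, add x (add y z) = add (add x y) z;
  add_comm : forall x y, add x y = add y x;
  add_zero : forall x, add x zero = x;
  add_opp : forall x, add x (opp x) = zero;
  smul_smul : forall a b x, smul a (smul b x) = smul (Cmul a b) x;
  smul_one : forall x, smul C1 x = x;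
  smul_addl : forall a b x, smul (Cadd a b) x = add (smul a x) (smul b x);
  smul_addr : forall a x y, smul a (add x y) = add (smul a x) (smul a y);
  mul_assoc : forall x y z, mul x (mul y z) = mul (mul x y) z;
  mul_onel : forall x, mul one x = x;
  mul_oner : forall x, mul x one = x;
  mul_addl : forall x y z, mul (add x y) z = add (mul x z) (mul y z);
  mul_addr : forall x y z, mul x (add y z) = add (mul x y) (mul x z);
  mul_smull : forall a x y, mul (smul a x) y = smul a (mul x y);
  mul_smulr : forall a x y, mul x (smul a y) = smul a (mul x y);
  star_star : forall x, star (star x) = x;
  star_add : forall x y, star (add x y) = add (star x) (star y);
  star_smul : forall a x, star (smul a x) = smul (Cconj a) (star x);
  star_mul : forall x y, star (mul x y) = mul (star y) (star x);
  norm_eq0 : forall x, norm x = 0 -> x = zero;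
  norm_triangle : forall x y, norm (add x y) <= norm x + norm y;
  norm_smul : forall a x, norm (smul a x) = Cmod a * norm x;
  norm_mul : forall x y, norm (mul x y) <= norm x * norm y;
  norm_cstar : forall x, norm (mul (star x) x) = norm x * norm x;
  complete : forall s : nat -> car,
    (forall e, 0 < e -> exists N, forall m n, (N <= m)%nat -> (N <= n)%nat ->
        norm (add (s m) (opp (s n))) < e) ->
    exists l, forall e, 0 < e -> exists N, forall n, (N <= n)%nat ->
        norm (add (s n) (opp l)) < e
}.

Arguments add {_}. Arguments zero {_}. Arguments opp {_}. Arguments smul {_}.
Arguments mul {_}. Arguments one {_}. Arguments star {_}. Arguments norm {_}.

Definition is_linear {A : CstarAlg} (f : A -> Cplx) : Prop :=
  (forall x y, f (add x y) = Cadd (f x) (f y)) /\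
  (forall a x, f (smul a x) = Cmul a (f x)).

Definition is_character {A : CstarAlg} (f : A -> Cplx) : Prop :=
  is_linear f /\ (forall x y, f (mul x y) = Cmul (f x) (f y)) /\
  (exists x, f x <> C0).

Definition is_bounded {A : CstarAlg} (f : A -> Cplx) : Prop :=
  exists M : R, forall x, Cmod (f x) <= M * norm x.

Definition is_positive {A : CstarAlg} (f : A -> Cplx) : Prop :=
  forall x : A, Cnonneg (f (mul (star x) x)).

Definition is_state {A : CstarAlg} (v : A -> Cplx) : Prop :=
  is_linear v /\ is_positive v /\ v one = C1.

(* Main.v *)
From Stdlib Require Import Reals Lra Lia Psatz.
From Stdlib Require Import ProofIrrelevance.
Require Import Defs.
Open Scope R_scope.

Lemma Ceq (z w : Cplx) : re z = re w -> im z = im w -> z = w.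
Proof. destruct z, w; simpl; intros; subst; reflexivity. Qed.

Ltac cplx := apply Ceq; simpl; try ring.

Section Basics.
Context {A : CstarAlg}.

Definition sub (x y : A) : A := add x (opp y).
Definition sc (r : R) (x : A) : A := smul (RtoC r) x.

Lemma add_0l (x : A) : add zero x = x.
Proof. rewrite add_comm; apply add_zero. Qed.

Lemma add_cancel_l (x y z : A) : add x y = add x z -> y = z.
Proof.
  intro H. rewrite <- (add_0l y), <- (add_0l z).
  rewrite <- (add_opp A x), (add_comm A x (opp x)).
  rewrite <- !add_assoc, H. reflexivity.
Qed.

Lemma smul_C0 (x : A) : smul C0 x = zero.
Proof.
  apply (add_cancel_l (smul C0 x)). rewrite add_zero.
  rewrite <- smul_addl. f_equal. cplx.
Qed.

Lemma opp_unique (x y : A) : add x y = zero -> y = opp x.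
Proof. intro H. apply (add_cancel_l x). rewrite H, add_opp. reflexivity. Qed.

Lemma opp_smul (x : A) : opp x = smul (RtoC (-1)) x.
Proof.
  symmetry; apply opp_unique.
  rewrite <- (smul_one A x) at 1. rewrite <- smul_addl.
  rewrite <- (smul_C0 x). f_equal. cplx.
Qed.

Lemma smul_zero (a : Cplx) : smul a (zero : A) = zero.
Proof.
  apply (add_cancel_l (smul a zero)). rewrite add_zero, <- smul_addr, add_zero. reflexivity.
Qed.

Lemma mul_0l (x : A) : mul zero x = zero.
Proof.
  apply (add_cancel_l (mul zero x)). rewrite add_zero, <- mul_addl, add_zero. reflexivity.
Qed.

Lemma mul_0r (x : A) : mul x zero = zero.
Proof.
  apply (add_cancel_l (mul x zero)). rewrite add_zero, <- mul_addr, add_zero. reflexivity.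
Qed.

Lemma star_zero : star (zero : A) = zero.
Proof.
  transitivity (star (smul C0 (zero:A))). { f_equal; symmetry; apply smul_C0. }
  rewrite star_smul. replace (Cconj C0) with C0 by cplx. apply smul_C0.
Qed.

Lemma star_one : star (one : A) = one.
Proof.
  rewrite <- (mul_oner A (star one)). rewrite <- (star_star A one) at 2.
  rewrite <- star_mul, mul_oner, star_star. reflexivity.
Qed.

Lemma smul_smul' (a b : Cplx) (x : A) : smul a (smul b x) = smul (Cmul a b) x.
Proof. apply smul_smul. Qed.

Lemma opp_add (x y : A) : opp (add x y) = add (opp x) (opp y).
Proof. rewrite !opp_smul, smul_addr. reflexivity. Qed.

Lemma star_opp (x : A) : star (opp x) = opp (star x).
Proof. rewrite !opp_smul, star_smul. f_equal. cplx. Qed.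

Lemma star_sub (x y : A) : star (sub x y) = sub (star x) (star y).
Proof. unfold sub. rewrite star_add, star_opp. reflexivity. Qed.

Lemma mul_oppl (x y : A) : mul (opp x) y = opp (mul x y).
Proof. rewrite !opp_smul, mul_smull. reflexivity. Qed.

Lemma mul_oppr (x y : A) : mul x (opp y) = opp (mul x y).
Proof. rewrite !opp_smul, mul_smulr. reflexivity. Qed.

Lemma mul_subl (x y z : A) : mul (sub x y) z = sub (mul x z) (mul y z).
Proof. unfold sub. rewrite mul_addl, mul_oppl. reflexivity. Qed.

Lemma mul_subr (x y z : A) : mul x (sub y z) = sub (mul x y) (mul x z).
Proof. unfold sub. rewrite mul_addr, mul_oppr. reflexivity. Qed.

Lemma sub_diag (x : A) : sub x x = zero.
Proof. apply add_opp. Qed.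

Lemma opp_opp (x : A) : opp (opp x) = x.
Proof. symmetry; apply opp_unique. rewrite add_comm; apply add_opp. Qed.

Lemma sub_eq0 (x y : A) : sub x y = zero -> x = y.
Proof.
  unfold sub; intro H. apply opp_unique in H.
  rewrite <- (opp_opp x), <- H, opp_opp. reflexivity.
Qed.

Lemma Cmod_RtoC r : Cmod (RtoC r) = Rabs r.
Proof.
  unfold Cmod, RtoC; simpl. replace (r*r+0*0) with (r*r) by ring.
  rewrite <- sqrt_Rsqr_abs. reflexivity.
Qed.

Lemma Cmod_C0 : Cmod C0 = 0.
Proof. unfold Cmod; simpl. replace (0*0+0*0) with 0 by ring. apply sqrt_0. Qed.

Lemma Cmod_ge0 z : 0 <= Cmod z.
Proof. apply sqrt_pos. Qed.

Lemma Cmod_re z : Rabs (re z) <= Cmod z.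
Proof.
  unfold Cmod. rewrite <- sqrt_Rsqr_abs. apply sqrt_le_1_alt. unfold Rsqr.
  pose proof (Rle_0_sqr (im z)). unfold Rsqr in H. lra.
Qed.

Lemma Cmod_im z : Rabs (im z) <= Cmod z.
Proof.
  unfold Cmod. rewrite <- sqrt_Rsqr_abs. apply sqrt_le_1_alt. unfold Rsqr.
  pose proof (Rle_0_sqr (re z)). unfold Rsqr in H. lra.
Qed.

Lemma norm_zero : norm (zero : A) = 0.
Proof. rewrite <- (smul_C0 zero), norm_smul, Cmod_C0. ring. Qed.

Lemma norm_sc r (x : A) : norm (sc r x) = Rabs r * norm x.
Proof. unfold sc. rewrite norm_smul, Cmod_RtoC. reflexivity. Qed.

Lemma norm_opp (x : A) : norm (opp x) = norm x.
Proof. rewrite opp_smul. fold (sc (-1) x). rewrite norm_sc.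
  replace (Rabs (-1)) with 1 by (unfold Rabs; destruct Rcase_abs; lra). ring. Qed.

Lemma norm_nonneg (x : A) : 0 <= norm x.
Proof.
  pose proof (norm_triangle A x (opp x)). rewrite add_opp, norm_zero, norm_opp in H. lra.
Qed.

Lemma norm_sub_le (x y : A) : norm (sub x y) <= norm x + norm y.
Proof. unfold sub. rewrite <- (norm_opp y). apply norm_triangle. Qed.

Lemma sub_anti (x y : A) : sub x y = opp (sub y x).
Proof. unfold sub. rewrite opp_add, opp_opp, add_comm. reflexivity. Qed.

Lemma norm_sub_sym (x y : A) : norm (sub x y) = norm (sub y x).
Proof. rewrite sub_anti, norm_opp. reflexivity. Qed.

Lemma norm_sub_tri (x y z : A) : norm (sub x z) <= norm (sub x y) + norm (sub y z).
Proof.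
  replace (sub x z) with (add (sub x y) (sub y z)). apply norm_triangle.
  unfold sub. rewrite <- add_assoc, (add_assoc _ (opp y) y), (add_comm _ (opp y) y), add_opp, add_0l.
  reflexivity.
Qed.

Lemma norm_star_le (x : A) : norm x <= norm (star x).
Proof.
  destruct (Req_dec (norm x) 0) as [H|H].
  - rewrite H; apply norm_nonneg.
  - pose proof (norm_cstar A x). pose proof (norm_mul A (star x) x).
    pose proof (norm_nonneg x). pose proof (norm_nonneg (star x)).
    assert (0 < norm x) by lra. nra.
Qed.

Lemma norm_star (x : A) : norm (star x) = norm x.
Proof.
  apply Rle_antisym. 2: apply norm_star_le.
  rewrite <- (star_star A x) at 2. apply norm_star_le.
Qed.

Lemma norm_cstar' (x : A) : norm (mul x (star x)) = norm x * norm x.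
Proof. rewrite <- (star_star A x) at 1. rewrite norm_cstar, norm_star. reflexivity. Qed.

Lemma norm_one_le : norm (one : A) <= 1.
Proof.
  pose proof (norm_cstar A one). rewrite star_one, mul_oner in H.
  pose proof (norm_nonneg one). nra.
Qed.

Lemma norm_small (x : A) : (forall e, 0 < e -> norm x <= e) -> x = zero.
Proof.
  intro H. apply norm_eq0. apply Rle_antisym. 2: apply norm_nonneg.
  apply Rnot_lt_le; intro Hc. assert (0 < norm x / 2) by lra.
  specialize (H _ H0). lra.
Qed.

Lemma sub_add_cancel (x y : A) : add (sub x y) y = x.
Proof. unfold sub. rewrite <- add_assoc, (add_comm _ (opp y) y), add_opp, add_zero. reflexivity. Qed.

Lemma norm_le_sub (x y : A) : norm x <= norm (sub x y) + norm y.
Proof. rewrite <- (sub_add_cancel x y) at 1. apply norm_triangle. Qed.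

Lemma sub_add_sub (a b c : A) : add (sub a b) (sub b c) = sub a c.
Proof.
  unfold sub. rewrite <- add_assoc, (add_assoc _ (opp b) b), (add_comm _ (opp b) b), add_opp, add_0l.
  reflexivity.
Qed.

Lemma sub_sub_cancel (a b d : A) : sub (sub a b) (sub d b) = sub a d.
Proof.
  unfold sub at 1. rewrite <- (sub_anti b d). apply sub_add_sub.
Qed.

End Basics.

Section Comm.
Context {A : CstarAlg}.
Variable Sset : A -> Prop.
Hypothesis Scomm : forall x y, Sset x -> Sset y -> mul x y = mul y x.

Inductive gen : A -> Prop :=
| g_base x : Sset x -> gen x
| g_sc (r : R) : gen (sc r one)
| g_one : gen one
| g_zero : gen zero
| g_add x y : gen x -> gen y -> gen (add x y)
| g_mul x y : gen x -> gen y -> gen (mul x y)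
| g_opp x : gen x -> gen (opp x).

Lemma sc_one_comm (r : R) (y : A) : mul (sc r one) y = mul y (sc r one).
Proof. unfold sc. rewrite mul_smull, mul_smulr, mul_onel, mul_oner. reflexivity. Qed.

Lemma gen_comm_ext (c : A) (Hc : forall s, Sset s -> mul c s = mul s c) x :
  gen x -> mul c x = mul x c.
Proof.
  induction 1.
  - auto.
  - symmetry; apply sc_one_comm.
  - rewrite mul_onel, mul_oner; auto.
  - rewrite mul_0l, mul_0r; auto.
  - rewrite mul_addl, mul_addr, IHgen1, IHgen2; auto.
  - rewrite mul_assoc, IHgen1, <- mul_assoc, IHgen2, mul_assoc; auto.
  - rewrite mul_oppl, mul_oppr, IHgen; auto.
Qed.

Lemma gen_comm_S x : gen x -> forall s, Sset s -> mul x s = mul s x.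
Proof.
  induction 1; intros s Hs.
  - apply Scomm; auto.
  - apply sc_one_comm.
  - rewrite mul_onel, mul_oner; auto.
  - rewrite mul_0l, mul_0r; auto.
  - rewrite mul_addl, mul_addr, IHgen1, IHgen2; auto.
  - rewrite <- mul_assoc, IHgen2, mul_assoc, IHgen1, mul_assoc; auto.
  - rewrite mul_oppl, mul_oppr, IHgen; auto.
Qed.

Lemma gen_comm y : gen y -> forall x, gen x -> mul x y = mul y x.
Proof.
  induction 1; intros z Hz.
  - apply gen_comm_S; auto.
  - symmetry; apply sc_one_comm.
  - rewrite mul_onel, mul_oner; auto.
  - rewrite mul_0l, mul_0r; auto.
  - rewrite mul_addl, mul_addr, IHgen1, IHgen2; auto.
  - rewrite mul_assoc, IHgen1, <- mul_assoc, IHgen2, mul_assoc; auto.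
  - rewrite mul_oppl, mul_oppr, IHgen; auto.
Qed.

Definition T := { x : A | gen x }.
Definition tval (t : T) : A := proj1_sig t.
Definition t0 : T := exist _ zero g_zero.
Definition t1 : T := exist _ one g_one.
Definition tR (r : R) : T := exist _ (sc r one) (g_sc r).
Definition tadd (a b : T) : T := exist _ (add (tval a) (tval b)) (g_add _ _ (proj2_sig a) (proj2_sig b)).
Definition tmul (a b : T) : T := exist _ (mul (tval a) (tval b)) (g_mul _ _ (proj2_sig a) (proj2_sig b)).
Definition topp (a : T) : T := exist _ (opp (tval a)) (g_opp _ (proj2_sig a)).
Definition tsub (a b : T) : T := tadd a (topp b).

Lemma teq (a b : T) : tval a = tval b -> a = b.
Proof. destruct a, b; simpl; intro; subst. f_equal; apply proof_irrelevance. Qed.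

Lemma sc0_zero : sc 0 (one : A) = zero.
Proof. apply smul_C0. Qed.
Lemma sc1_one : sc 1 (one : A) = one.
Proof. apply smul_one. Qed.

Lemma T_ring : ring_theory t0 t1 tadd tmul tsub topp eq.
Proof.
  constructor; intros; apply teq; simpl; unfold tval; simpl.
  - apply add_0l.
  - apply add_comm.
  - apply add_assoc.
  - apply mul_onel.
  - apply gen_comm; apply proj2_sig.
  - apply mul_assoc.
  - apply mul_addl.
  - reflexivity.
  - apply add_opp.
Qed.

Add Ring Tring : T_ring.

Lemma tR_add r s : tR (r + s) = tadd (tR r) (tR s).
Proof. apply teq; simpl. unfold sc. rewrite <- smul_addl. f_equal. cplx. Qed.
Lemma tR_mul r s : tR (r * s) = tmul (tR r) (tR s).
Proof. apply teq; simpl. unfold sc. rewrite mul_smull, mul_onel, smul_smul. f_equal. cplx. Qed.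


Lemma tR1 : tR 1 = t1.
Proof. apply teq; apply sc1_one. Qed.

Lemma tR2 : tR 2 = tadd t1 t1.
Proof. replace 2 with (1+1) by lra. rewrite tR_add, tR1. reflexivity. Qed.

Lemma T_sqdiff (a b : T) : tval (tsub (tmul a a) (tmul b b)) = tval (tmul (tadd a b) (tsub a b)).
Proof. f_equal. ring. Qed.

Lemma T_wstep (r : R) (Y a b : T) :
  tval (tsub (tmul (tR r) (tadd Y (tmul a a))) (tmul (tR r) (tadd Y (tmul b b)))) =
  tval (tmul (tR r) (tmul (tadd a b) (tsub a b))).
Proof. f_equal. ring. Qed.

Lemma T_half (Y l : T) : l = tmul (tR (1/2)) (tadd Y (tmul l l)) ->
  tmul (tR 2) l = tadd Y (tmul l l).
Proof.
  intro H. rewrite H at 1.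
  transitivity (tmul (tR (2 * (1/2))) (tadd Y (tmul l l))).
  rewrite tR_mul; ring. replace (2 * (1/2)) with 1 by lra. rewrite tR1. ring.
Qed.

Lemma T_cinv (c : R) (X : T) : c <> 0 -> tmul (tR c) (tmul (tR (1/c)) X) = X.
Proof.
  intro Hc. transitivity (tmul (tR (c * (1/c))) X). rewrite tR_mul; ring.
  replace (c * (1/c)) with 1 by (field; auto). rewrite tR1; ring.
Qed.

Lemma T_scale_sq (r : R) (b : T) : 0 <= r ->
  tmul (tmul (tR (sqrt r)) b) (tmul (tR (sqrt r)) b) = tmul (tR r) (tmul b b).
Proof.
  intro Hr. rewrite <- (sqrt_sqrt r Hr) at 3. rewrite tR_mul. ring.
Qed.

Lemma T_Tb (c : R) (b : T) : c <> 0 ->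
  tval (tsub (tR c) (tmul b b)) = tval (tmul (tR c) (tsub t1 (tmul (tR (1/c)) (tmul b b)))).
Proof.
  intro Hc. f_equal.
  transitivity (tsub (tmul (tR c) t1) (tmul (tR c) (tmul (tR (1/c)) (tmul b b)))).
  rewrite T_cinv; auto; ring. ring.
Qed.

Lemma T_T5 (a z : T) (c d L : R) : L = c + d -> 0 < L ->
  tmul z z = tsub t1 (tmul (tR (1/L)) (tsub (tR c) (tsub t1 (tmul a a)))) ->
  tval (tadd (tmul a a) (tmul (tmul (tR (sqrt L)) z) (tmul (tR (sqrt L)) z))) = tval (tR (1 + d)).
Proof.
  intros HL HL0 Hz. f_equal. rewrite T_scale_sq by lra. rewrite Hz.
  transitivity (tadd (tmul a a) (tsub (tR L) (tmul (tR L) (tmul (tR (1/L)) (tsub (tR c) (tsub t1 (tmul a a))))))).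
  ring. rewrite T_cinv by lra. rewrite HL, !tR_add, tR1. ring.
Qed.

Lemma T_sqrt_id (Y l : T) : tmul (tR 2) l = tadd Y (tmul l l) ->
  tval (tmul (tsub t1 l) (tsub t1 l)) = tval (tsub t1 Y).
Proof.
  intro H. f_equal. rewrite tR2 in H.
  transitivity (tadd (tsub t1 (tmul (tadd t1 t1) l)) (tmul l l)). ring.
  rewrite H. ring.
Qed.

Hypothesis Ssa : forall x, Sset x -> star x = x.

Lemma gen_sa x : gen x -> star x = x.
Proof.
  induction 1.
  - auto.
  - unfold sc. rewrite star_smul, star_one. f_equal. cplx.
  - apply star_one.
  - apply star_zero.
  - rewrite star_add, IHgen1, IHgen2. reflexivity.
  - rewrite star_mul, IHgen1, IHgen2. apply gen_comm; auto.
  - rewrite star_opp, IHgen. reflexivity.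
Qed.

Inductive sosT : T -> Prop :=
| sT_sq b : sosT (tmul b b)
| sT_add x y : sosT x -> sosT y -> sosT (tadd x y).

Lemma sosT_mul x y : sosT x -> sosT y -> sosT (tmul x y).
Proof.
  induction 1 as [b|x1 x2 H1 IH1 H2 IH2]; intro Hy.
  - induction Hy as [c|y1 y2 Hy1 IHy1 Hy2 IHy2].
    + replace (tmul (tmul b b) (tmul c c)) with (tmul (tmul b c) (tmul b c)) by ring. constructor.
    + replace (tmul (tmul b b) (tadd y1 y2)) with (tadd (tmul (tmul b b) y1) (tmul (tmul b b) y2)) by ring.
      constructor; auto.
  - replace (tmul (tadd x1 x2) y) with (tadd (tmul x1 y) (tmul x2 y)) by ring. constructor; auto.
Qed.

Lemma tR_sq r : 0 <= r -> tR r = tmul (tR (sqrt r)) (tR (sqrt r)).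
Proof. intro. rewrite <- tR_mul, sqrt_sqrt; auto. Qed.

Section T6.
Variables h z : T.
Hypothesis hz : tadd (tmul h h) (tmul z z) = t1.

Fixpoint gk (k : nat) : T := match k with O => z | S k => tmul (gk k) (gk k) end.
Definition ck (k : nat) : R := 2 ^ k.
Definition qk k := tmul (tmul (gk k) (gk k)) (tadd t1 (tmul (tR (ck k)) (tmul h h))).
Definition Ek k := tsub t1 (qk k).
Definition ak k := tmul (tR (sqrt (ck k))) (tmul h (gk k)).

Lemma ck_pos k : 0 <= ck k.
Proof. unfold ck. apply pow_le. lra. Qed.

Lemma Ek_sos k : sosT (Ek k).
Proof.
  induction k.
  - unfold Ek, qk; simpl. unfold ck; simpl. rewrite tR1.
    replace (tsub t1 (tmul (tmul z z) (tadd t1 (tmul t1 (tmul h h)))))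
      with (tadd (tmul (tmul h h) (tmul h h))
              (tmul (tsub t1 (tadd (tmul h h) (tmul z z))) (tadd t1 (tmul h h)))) by ring.
    rewrite hz. replace (tsub t1 t1) with t0 by ring.
    replace (tadd (tmul (tmul h h) (tmul h h)) (tmul t0 (tadd t1 (tmul h h))))
      with (tmul (tmul h h) (tmul h h)) by ring.
    constructor.
  - assert (E : Ek (S k) = tadd (tmul (Ek k) (tadd t1 (qk k)))
                   (tmul (tmul (tR (ck k)) (tmul (tmul h h) (tmul (gk k) (gk k))))
                         (tmul (tR (ck k)) (tmul (tmul h h) (tmul (gk k) (gk k)))))).
    { unfold Ek, qk. simpl. unfold ck at 1; simpl. fold (ck k).
      rewrite tR_mul, tR2.
      ring. }
    rewrite E. constructor. 2: constructor.
    apply sosT_mul; auto.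
    unfold qk. constructor. replace t1 with (tmul t1 t1) by ring. constructor.
    rewrite (tR_sq (ck k) (ck_pos k)).
    replace (tmul (tmul (gk k) (gk k)) (tadd t1 (tmul (tmul (tR (sqrt (ck k))) (tR (sqrt (ck k)))) (tmul h h))))
      with (tadd (tmul (gk k) (gk k)) (tmul (tmul (tR (sqrt (ck k))) (tmul h (gk k))) (tmul (tR (sqrt (ck k))) (tmul h (gk k))))) by ring.
    constructor; constructor.
Qed.

Lemma ak_identity k : tadd (tmul (ak k) (ak k)) (tadd (Ek k) (tmul (gk k) (gk k))) = t1.
Proof.
  unfold ak, Ek, qk. rewrite (tR_sq (ck k) (ck_pos k)). ring.
Qed.

End T6.
End Comm.

Lemma gen_mono {A : CstarAlg} (S1 S2 : A -> Prop) : (forall x, S1 x -> S2 x) ->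
  forall x, gen S1 x -> gen S2 x.
Proof. intros H x Hx; induction Hx; try (constructor; auto; fail). Qed.


Lemma pow_le1 q n : 0 <= q <= 1 -> q ^ n <= 1.
Proof.
  intro H; induction n; simpl. lra.
  pose proof (pow_le q n (proj1 H)). nra.
Qed.

Section Lim.
Context {A : CstarAlg}.

Definition conv (s : nat -> A) (l : A) :=
  forall e, 0 < e -> exists N, forall n, (N <= n)%nat -> norm (sub (s n) l) < e.

Lemma geo_partial (s : nat -> A) q C : 0 <= q < 1 -> 0 <= C ->
  (forall n, norm (sub (s (S n)) (s n)) <= C * q ^ n) ->
  forall n d, norm (sub (s (n + d)%nat) (s n)) <= C * q ^ n * (1 - q ^ d) / (1 - q).
Proof.
  intros Hq HC Hs n d. induction d.
  - rewrite Nat.add_0_r, sub_diag, norm_zero. simpl.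
    replace (C * q ^ n * (1 - 1) / (1 - q)) with 0 by (field; lra). lra.
  - eapply Rle_trans. apply (norm_sub_tri _ (s (n + d)%nat)).
    replace (n + S d)%nat with (S (n + d)) by lia.
    pose proof (Hs (n + d)%nat). rewrite pow_add in H.
    replace (C * q ^ n * (1 - q ^ S d) / (1 - q)) with
      (C * (q ^ n * q ^ d) + C * q ^ n * (1 - q ^ d) / (1 - q)) by (simpl; field; lra).
    lra.
Qed.

Lemma geo_bound (s : nat -> A) q C : 0 <= q < 1 -> 0 <= C ->
  (forall n, norm (sub (s (S n)) (s n)) <= C * q ^ n) ->
  forall n m, (n <= m)%nat -> norm (sub (s m) (s n)) <= C * q ^ n / (1 - q).
Proof.
  intros Hq HC Hs n m Hnm. replace m with (n + (m - n))%nat by lia.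
  eapply Rle_trans. apply (geo_partial s q C); auto.
  pose proof (pow_le q n (proj1 Hq)). pose proof (pow_le q (m - n) (proj1 Hq)).
  apply Rmult_le_compat_r. left; apply Rinv_0_lt_compat; lra.
  assert (0 <= C * q ^ n) by (apply Rmult_le_pos; auto). nra.
Qed.

Lemma geo_lim (s : nat -> A) q C : 0 <= q < 1 -> 0 <= C ->
  (forall n, norm (sub (s (S n)) (s n)) <= C * q ^ n) -> exists l, conv s l.
Proof.
  intros Hq HC Hs. destruct (complete A s) as [l Hl].
  - intros e He.
    assert (Hy : 0 < e * (1 - q) / (C + 1)).
    { apply Rdiv_lt_0_compat; try lra. apply Rmult_lt_0_compat; lra. }
    destruct (pow_lt_1_zero q ltac:(rewrite Rabs_right; lra) _ Hy) as [N HN].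
    exists N. intros m n Hm Hn.
    assert (key : forall a b, (N <= a)%nat -> (a <= b)%nat -> norm (sub (s b) (s a)) < e).
    { intros a b Ha Hab. eapply Rle_lt_trans. apply geo_bound; eauto.
      specialize (HN a Ha). rewrite Rabs_right in HN by (apply Rle_ge, pow_le; lra).
      apply (Rmult_lt_compat_l (C+1)) in HN; [| lra].
      replace ((C+1) * (e*(1-q)/(C+1))) with (e*(1-q)) in HN by (field; lra).
      apply (Rmult_lt_reg_r (1-q)); [lra|].
      replace (C*q^a/(1-q)*(1-q)) with (C*q^a) by (field;lra).
      pose proof (pow_le q a (proj1 Hq)). nra. }
    destruct (Compare_dec.le_lt_dec n m).
    + apply key; auto.
    + fold (sub (s m) (s n)). rewrite norm_sub_sym. apply key; auto; lia.
  - exists l. exact Hl.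
Qed.

End Lim.

Section LimFacts.
Context {A : CstarAlg}.

Lemma conv_bound (s : nat -> A) l B : conv s l -> (forall n, norm (s n) <= B) -> norm l <= B.
Proof.
  intros Hc Hb. apply Rnot_lt_le; intro H.
  assert (He : 0 < norm l - B) by lra. destruct (Hc _ He) as [N HN].
  specialize (HN N (le_n _)). specialize (Hb N).
  pose proof (norm_le_sub l (s N)). rewrite norm_sub_sym in H0. lra.
Qed.

Lemma norm_small_K (x : A) K : 0 <= K -> (forall e, 0 < e -> norm x <= K * e) -> x = zero.
Proof.
  intros HK H. apply norm_small. intros e He.
  specialize (H (e / (K + 1))). 
  assert (0 < e / (K+1)) by (apply Rdiv_lt_0_compat; lra).
  specialize (H H0). eapply Rle_trans; [exact H|].
  apply (Rmult_le_reg_r (K+1)); [lra|].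
  replace (K * (e / (K+1)) * (K+1)) with (K * e) by (field; lra). nra.
Qed.

Lemma norm_mul_sc r (x : A) : norm (mul (sc r one) x) <= Rabs r * norm x.
Proof.
  eapply Rle_trans. apply norm_mul. rewrite norm_sc.
  pose proof (norm_one_le (A:=A)). pose proof (Rabs_pos r). pose proof (norm_nonneg x).
  pose proof (Rmult_le_pos _ _ H0 H1). nra.
Qed.

Lemma sub_zero_r (x : A) : sub x zero = x.
Proof. unfold sub. rewrite opp_smul, smul_zero, add_zero. reflexivity. Qed.

End LimFacts.

Section Sqrt.
Context {A : CstarAlg}.
Variable Y : A.
Hypothesis HYsa : star Y = Y.
Variable rho : R.
Hypothesis HY : norm Y <= rho.
Hypothesis Hrho : rho < 1.

Definition Sy : A -> Prop := fun x => x = Y.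
Lemma Sy_comm : forall x y, Sy x -> Sy y -> mul x y = mul y x.
Proof. unfold Sy; intros; subst; reflexivity. Qed.

Fixpoint wseq n := match n with
  | O => zero
  | S n => mul (sc (1/2) one) (add Y (mul (wseq n) (wseq n))) end.

Lemma wseq_gen n : gen Sy (wseq n).
Proof.
  induction n; simpl. apply g_zero.
  apply g_mul. apply g_sc. apply g_add. apply g_base. reflexivity. apply g_mul; auto.
Qed.

Definition qq := (1 + rho) / 2.
Lemma rho_nn : 0 <= rho.
Proof. pose proof (norm_nonneg Y). lra. Qed.

Lemma wseq_bound n : norm (wseq n) <= qq.
Proof.
  pose proof rho_nn. unfold qq.
  induction n; simpl. rewrite norm_zero. lra.
  eapply Rle_trans. apply norm_mul_sc.
  pose proof (norm_triangle A Y (mul (wseq n) (wseq n))).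
  pose proof (norm_mul A (wseq n) (wseq n)). pose proof (norm_nonneg (wseq n)).
  rewrite Rabs_right by lra. nra.
Qed.

Definition TY : T Sy := exist _ Y (g_base _ _ eq_refl).
Definition Tw n : T Sy := exist _ (wseq n) (wseq_gen n).

Lemma wseq_diff n : norm (sub (wseq (S n)) (wseq n)) <= 1 * qq ^ n.
Proof.
  pose proof rho_nn. 
  induction n.
  - change (wseq 0) with (zero : A). rewrite sub_zero_r.
    eapply Rle_trans; [apply wseq_bound|]. unfold qq; simpl; lra.
  - pose proof (T_wstep Sy Sy_comm (1/2) TY (Tw (S n)) (Tw n)) as E.
    change (sub (wseq (S (S n))) (wseq (S n)) =
      mul (sc (1/2) one) (mul (add (wseq (S n)) (wseq n)) (sub (wseq (S n)) (wseq n)))) in E.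
    rewrite E. eapply Rle_trans. apply norm_mul_sc.
    eapply Rle_trans. apply Rmult_le_compat_l. apply Rabs_pos. apply norm_mul.
    pose proof (norm_triangle A (wseq (S n)) (wseq n)).
    pose proof (wseq_bound (S n)). pose proof (wseq_bound n).
    pose proof (norm_nonneg (add (wseq (S n)) (wseq n))).
    pose proof (norm_nonneg (sub (wseq (S n)) (wseq n))).
    rewrite Rabs_right by lra. replace (qq ^ S n) with (qq * qq ^ n) by reflexivity.
    assert (Ha : norm (add (wseq (S n)) (wseq n)) <= 2 * qq) by lra.
    assert (Hq : 0 <= qq) by (unfold qq; lra).
    set (a := norm (add (wseq (S n)) (wseq n))) in *.
    set (d := norm (sub (wseq (S n)) (wseq n))) in *.
    assert (a * d <= 2 * qq * d) by (apply Rmult_le_compat_r; lra).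
    assert (2 * qq * d <= 2 * qq * (1 * qq ^ n)) by (apply Rmult_le_compat_l; lra).
    lra.
Qed.

Lemma wseq_conv : exists l, conv wseq l.
Proof.
  apply (geo_lim wseq qq 1). pose proof rho_nn. unfold qq; lra. lra. apply wseq_diff.
Qed.

Lemma comm_diff (c w l : A) : mul c w = mul w c ->
  sub (mul c l) (mul l c) = sub (mul c (sub l w)) (mul (sub l w) c).
Proof.
  intro H. rewrite mul_subr, mul_subl, H. symmetry; apply sub_sub_cancel.
Qed.

Lemma sqrt_main : exists z : A, star z = z /\ mul z z = sub one Y /\
  (forall c, mul c Y = mul Y c -> mul c z = mul z c).
Proof.
  destruct wseq_conv as [l Hl].
  assert (Hcomm : forall c, mul c Y = mul Y c -> mul c l = mul l c).
  { intros c Hc. apply sub_eq0. apply (norm_small_K _ (2 * norm c)).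
    pose proof (norm_nonneg c); lra.
    intros e He. destruct (Hl e He) as [N HN]. specialize (HN N (le_n _)).
    rewrite (comm_diff c (wseq N) l).
    2: { apply (gen_comm_ext Sy c). intros s Hs; unfold Sy in Hs; subst; auto. apply wseq_gen. }
    eapply Rle_trans. apply norm_sub_le. rewrite norm_sub_sym in HN.
    pose proof (norm_mul A c (sub l (wseq N))). pose proof (norm_mul A (sub l (wseq N)) c).
    pose proof (norm_nonneg c). 
    assert (norm c * norm (sub l (wseq N)) <= norm c * e) by (apply Rmult_le_compat_l; lra).
    lra. }
  assert (Hsa : star l = l).
  { apply sub_eq0. apply (norm_small_K _ 2). lra.
    intros e He. destruct (Hl e He) as [N HN]. specialize (HN N (le_n _)).
    assert (Hw : star (wseq N) = wseq N).
    { apply (gen_sa Sy Sy_comm). intros x Hx; unfold Sy in Hx; subst; auto. apply wseq_gen. }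
    rewrite <- (sub_add_sub (star l) (wseq N) l).
    eapply Rle_trans. apply norm_triangle.
    rewrite <- Hw at 1. rewrite <- star_sub, norm_star, norm_sub_sym. lra. }
  assert (HlY : mul l Y = mul Y l) by (symmetry; apply Hcomm; reflexivity).
  set (S2 := fun x => x = Y \/ x = l).
  assert (S2c : forall x y, S2 x -> S2 y -> mul x y = mul y x).
  { unfold S2; intros x y [->| ->] [->| ->]; auto. }
  assert (Hg2 : forall n, gen S2 (wseq n)).
  { intro n. apply (gen_mono Sy). intros x Hx; left; exact Hx. apply wseq_gen. }
  assert (Hlb : norm l <= qq) by (apply (conv_bound wseq); auto; apply wseq_bound).
  assert (Hfix : l = mul (sc (1/2) one) (add Y (mul l l))).
  { apply sub_eq0. apply (norm_small_K _ (1 + qq)). unfold qq; pose proof rho_nn; lra.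
    intros e He. destruct (Hl e He) as [N HN].
    pose proof (HN N (le_n _)) as HN0. pose proof (HN (S N) (le_S _ _ (le_n _))) as HN1.
    rewrite <- (sub_add_sub l (wseq (S N))).
    eapply Rle_trans. apply norm_triangle.
    pose proof (T_wstep S2 S2c (1/2) (exist _ Y (g_base _ _ (or_introl eq_refl)))
       (exist _ (wseq N) (Hg2 N)) (exist _ l (g_base _ _ (or_intror eq_refl)))) as E.
    change (sub (wseq (S N)) (mul (sc (1/2) one) (add Y (mul l l))) =
      mul (sc (1/2) one) (mul (add (wseq N) l) (sub (wseq N) l))) in E.
    rewrite E. eapply Rle_trans. apply Rplus_le_compat_l. apply norm_mul_sc.
    rewrite norm_sub_sym.
    pose proof (norm_mul A (add (wseq N) l) (sub (wseq N) l)).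
    pose proof (norm_triangle A (wseq N) l). pose proof (wseq_bound N).
    pose proof (norm_nonneg (add (wseq N) l)). pose proof (norm_nonneg (sub (wseq N) l)).
    rewrite Rabs_right by lra.
    assert (norm (add (wseq N) l) * norm (sub (wseq N) l) <= (2 * qq) * e).
    { apply Rmult_le_compat; lra. }
    lra. }
  exists (sub one l). split; [|split].
  - rewrite star_sub, star_one, Hsa. reflexivity.
  - pose proof (T_sqrt_id S2 S2c (exist _ Y (g_base _ _ (or_introl eq_refl)))
       (exist _ l (g_base _ _ (or_intror eq_refl)))) as E.
    apply E. apply (T_half S2 S2c). apply teq. exact Hfix.
  - intros c Hc. rewrite mul_subr, mul_subl, mul_onel, mul_oner, Hcomm; auto.
Qed.

End Sqrt.

Section Unit.
Context {A : CstarAlg}.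

Lemma add_swap4 (x y z u : A) : add (add x y) (add z u) = add (add x z) (add y u).
Proof.
  rewrite <- !add_assoc. f_equal. rewrite !add_assoc. f_equal. apply add_comm.
Qed.

Lemma add_self (a : A) : add a a = sc 2 a.
Proof.
  unfold sc. rewrite <- (smul_one A a) at 1 2. rewrite <- smul_addl. f_equal. cplx.
Qed.

Lemma unitary_trick (a b : A) t : star a = a -> star b = b -> mul a b = mul b a ->
  add (mul a a) (mul b b) = sc t one -> 0 <= t -> norm a * norm a <= t.
Proof.
  intros Ha Hb Hab Hsum Ht.
  set (iC := mkC 0 1). set (miC := mkC 0 (-1)).
  set (w := add a (smul iC b)).
  assert (Hstar : star w = add a (smul miC b)).
  { unfold w. rewrite star_add, star_smul, Ha, Hb. reflexivity. }
  assert (Hww : mul (star w) w = add (mul a a) (mul b b)).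
  { rewrite Hstar. unfold w. rewrite mul_addl, !mul_addr, !mul_smull, !mul_smulr, smul_smul.
    rewrite Hab. rewrite <- add_assoc. rewrite (add_assoc _ (smul iC (mul b a))).
    rewrite <- smul_addl. replace (Cadd iC miC) with C0 by (unfold iC, miC; cplx).
    rewrite smul_C0, add_0l. replace (Cmul miC iC) with C1 by (unfold iC, miC; cplx).
    rewrite smul_one. reflexivity. }
  assert (Hn : norm w * norm w <= t).
  { rewrite <- norm_cstar, Hww, Hsum, norm_sc, Rabs_right by lra.
    pose proof (norm_one_le (A:=A)). nra. }
  assert (Hs : add w (star w) = sc 2 a).
  { rewrite Hstar. unfold w. rewrite add_swap4, <- smul_addl.
    replace (Cadd iC miC) with C0 by (unfold iC, miC; cplx). rewrite smul_C0, add_zero.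
    apply add_self. }
  assert (H2 : 2 * norm a <= 2 * norm w).
  { replace (2 * norm a) with (norm (sc 2 a)) by (rewrite norm_sc, Rabs_right; lra).
    rewrite <- Hs. eapply Rle_trans. apply norm_triangle. rewrite norm_star. lra. }
  pose proof (norm_nonneg a). nra.
Qed.

End Unit.

Section SOS.
Context {A : CstarAlg}.

Inductive SOS : A -> Prop :=
| SOS_sq b : star b = b -> SOS (mul b b)
| SOS_add x y : SOS x -> SOS y -> SOS (add x y).

Lemma SOS_sa R : SOS R -> star R = R.
Proof.
  induction 1. rewrite star_mul, H; reflexivity.
  rewrite star_add, IHSOS1, IHSOS2; reflexivity.
Qed.

Lemma sub_add_add (x1 x2 y1 y2 : A) : sub (add x1 x2) (add y1 y2) = add (sub x1 y1) (sub x2 y2).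
Proof. unfold sub. rewrite opp_add, add_swap4. reflexivity. Qed.

Lemma sc_add_one (c1 c2 : R) : sc (c1 + c2) (one : A) = add (sc c1 one) (sc c2 one).
Proof. unfold sc. rewrite <- smul_addl. f_equal. cplx. Qed.

Lemma SOS_bound_sq (b : A) (Hb : star b = b) c : norm b * norm b + 1 <= c ->
  norm (sub (sc c one) (mul b b)) <= c.
Proof.
  intro Hc. set (Sb := fun x : A => x = b).
  assert (Sbc : forall x y, Sb x -> Sb y -> mul x y = mul y x) by (unfold Sb; intros; subst; auto).
  assert (Sbs : forall x, Sb x -> star x = x) by (unfold Sb; intros; subst; auto).
  set (tb := exist (gen Sb) b (g_base Sb b eq_refl)).
  set (TY := tmul Sb (tR Sb (1/c)) (tmul Sb tb tb)).
  pose proof (norm_nonneg b) as Hb0.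
  assert (Hc0 : 0 < c) by nra.
  assert (HYsa : star (tval Sb TY) = tval Sb TY) by (apply (gen_sa Sb Sbc Sbs); exact (proj2_sig _)).
  assert (HY : norm (tval Sb TY) <= norm b * norm b / c).
  { simpl. eapply Rle_trans. apply norm_mul_sc. rewrite Rabs_right.
    2: { apply Rle_ge. unfold Rdiv. rewrite Rmult_1_l. left; apply Rinv_0_lt_compat; lra. }
    pose proof (norm_mul A b b).
    replace (norm b * norm b / c) with (1 / c * (norm b * norm b)) by (field; lra).
    apply Rmult_le_compat_l. unfold Rdiv. rewrite Rmult_1_l. left; apply Rinv_0_lt_compat; lra.
    auto. }
  assert (Hrho : norm b * norm b / c < 1).
  { apply (Rmult_lt_reg_r c); auto. replace (norm b * norm b / c * c) with (norm b * norm b) by (field; lra). lra. }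
  destruct (sqrt_main _ HYsa _ HY Hrho) as [z [Hz1 [Hz2 Hz3]]].
  set (tb' := tmul Sb (tR Sb (sqrt (1/c))) tb).
  assert (Hb's : star (tval Sb tb') = tval Sb tb') by (apply (gen_sa Sb Sbc Sbs); exact (proj2_sig _)).
  assert (Hb'z : mul (tval Sb tb') z = mul z (tval Sb tb')).
  { apply Hz3. apply (gen_comm Sb Sbc); exact (proj2_sig _). }
  assert (Hb'b' : mul (tval Sb tb') (tval Sb tb') = tval Sb TY).
  { change (tval Sb (tmul Sb tb' tb') = tval Sb TY). f_equal. unfold tb', TY.
    apply (T_scale_sq Sb Sbc). apply Rlt_le; apply Rdiv_lt_0_compat; lra. }
  assert (Hzn : norm z * norm z <= 1).
  { apply (unitary_trick z (tval Sb tb') 1); auto. rewrite Hb'b', Hz2, sub_add_cancel, sc1_one. reflexivity.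
    lra. }
  pose proof (T_Tb Sb Sbc c tb ltac:(lra)) as E.
  change (sub (sc c one) (mul b b) = mul (sc c one) (sub one (tval Sb TY))) in E.
  rewrite E, <- Hz2. eapply Rle_trans. apply norm_mul_sc. rewrite Rabs_right by lra.
  pose proof (norm_mul A z z). pose proof (norm_nonneg (mul z z)). nra.
Qed.

Lemma SOS_bound R : SOS R -> exists C, 0 < C /\ forall c, C <= c -> norm (sub (sc c one) R) <= c.
Proof.
  induction 1 as [b Hb|x y Hx IHx Hy IHy].
  - exists (norm b * norm b + 1). split. pose proof (norm_nonneg b); nra.
    intros; apply SOS_bound_sq; auto.
  - destruct IHx as [C1 [HC1 H1]]. destruct IHy as [C2 [HC2 H2]].
    exists (C1 + C2). split. lra. intros c Hc.
    replace c with ((c - C2) + C2) at 1 by ring. rewrite sc_add_one, sub_add_add.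
    eapply Rle_trans. apply norm_triangle.
    pose proof (H1 (c - C2) ltac:(lra)). pose proof (H2 C2 ltac:(lra)). lra.
Qed.


Lemma add_sub_cancel_l (x y : A) : sub (add x y) x = y.
Proof. rewrite add_comm. unfold sub. rewrite <- add_assoc, add_opp, add_zero. reflexivity. Qed.

Lemma T5 (a R : A) : star a = a -> SOS R -> add (mul a a) R = one -> norm a * norm a <= 1.
Proof.
  intros Ha HR Hsum.
  assert (HR' : R = sub one (mul a a)) by (rewrite <- Hsum, add_sub_cancel_l; reflexivity).
  destruct (SOS_bound R HR) as [C [HC HCb]].
  apply Rnot_lt_le; intro Hlt.
  set (d := (norm a * norm a - 1) / 2).
  assert (Hd : 0 < d) by (unfold d; lra).
  set (c := C). set (L := c + d).
  set (Sa := fun x : A => x = a).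
  assert (Sac : forall x y, Sa x -> Sa y -> mul x y = mul y x) by (unfold Sa; intros; subst; auto).
  assert (Sas : forall x, Sa x -> star x = x) by (unfold Sa; intros; subst; auto).
  set (ta := exist (gen Sa) a (g_base Sa a eq_refl)).
  set (TY := tmul Sa (tR Sa (1/L)) (tsub Sa (tR Sa c) (tsub Sa (t1 Sa) (tmul Sa ta ta)))).
  assert (HYsa : star (tval Sa TY) = tval Sa TY) by (apply (gen_sa Sa Sac Sas); exact (proj2_sig _)).
  assert (HL : 0 < L) by (unfold L, c; lra).
  assert (HY : norm (tval Sa TY) <= c / L).
  { change (norm (mul (sc (1/L) one) (sub (sc c one) (sub one (mul a a)))) <= c / L).
    rewrite <- HR'. eapply Rle_trans. apply norm_mul_sc.
    rewrite Rabs_right by (apply Rle_ge, Rlt_le; apply Rdiv_lt_0_compat; lra).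
    pose proof (HCb c (Rle_refl _)).
    replace (c / L) with (1 / L * c) by (field; lra).
    apply Rmult_le_compat_l; auto. apply Rlt_le; apply Rdiv_lt_0_compat; lra. }
  assert (Hrho : c / L < 1).
  { apply (Rmult_lt_reg_r L); auto. replace (c / L * L) with c by (field; lra). unfold L; lra. }
  destruct (sqrt_main _ HYsa _ HY Hrho) as [z [Hz1 [Hz2 Hz3]]].
  assert (Haz : mul a z = mul z a).
  { apply Hz3. apply (gen_comm Sa Sac); exact (proj2_sig _) || (apply g_base; reflexivity). }
  set (S2 := fun x => x = a \/ x = z).
  assert (S2c : forall x y, S2 x -> S2 y -> mul x y = mul y x).
  { unfold S2; intros x y [->| ->] [->| ->]; auto. }
  assert (S2s : forall x, S2 x -> star x = x) by (unfold S2; intros x [->| ->]; auto).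
  set (ta2 := exist (gen S2) a (g_base S2 a (or_introl eq_refl))).
  set (tz2 := exist (gen S2) z (g_base S2 z (or_intror eq_refl))).
  set (tbeta := tmul S2 (tR S2 (sqrt L)) tz2).
  pose proof (T_T5 S2 S2c ta2 tz2 c d L eq_refl HL) as E.
  assert (Ez : tmul S2 tz2 tz2 = tsub S2 (t1 S2) (tmul S2 (tR S2 (1/L)) (tsub S2 (tR S2 c) (tsub S2 (t1 S2) (tmul S2 ta2 ta2))))).
  { apply teq. exact Hz2. }
  specialize (E Ez).
  change (add (mul a a) (mul (tval S2 tbeta) (tval S2 tbeta)) = sc (1 + d) one) in E.
  assert (Hbs : star (tval S2 tbeta) = tval S2 tbeta) by (apply (gen_sa S2 S2c S2s); exact (proj2_sig _)).
  assert (Hab : mul a (tval S2 tbeta) = mul (tval S2 tbeta) a).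
  { apply (gen_comm S2 S2c). exact (proj2_sig _). apply g_base; left; reflexivity. }
  pose proof (unitary_trick a (tval S2 tbeta) (1 + d) Ha Hbs Hab E ltac:(lra)).
  unfold d in H. lra.
Qed.

End SOS.

Lemma sosT_SOS {A : CstarAlg} (Sset : A -> Prop)
  (Scomm : forall x y, Sset x -> Sset y -> mul x y = mul y x)
  (Ssa : forall x, Sset x -> star x = x) (P : T Sset) :
  sosT Sset P -> SOS (tval Sset P).
Proof.
  induction 1.
  - apply SOS_sq. apply (gen_sa Sset Scomm Ssa). exact (proj2_sig _).
  - apply SOS_add; auto.
Qed.

Section AU.
Context {A : CstarAlg}.
Variable eps : A -> Cplx.
Hypothesis Hlin : is_linear eps.
Hypothesis Hmul : forall x y, eps (mul x y) = Cmul (eps x) (eps y).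
Hypothesis Hone : eps one = C1.

Lemma eps_zero : eps zero = C0.
Proof.
  rewrite <- (smul_C0 (zero : A)). rewrite (proj2 Hlin). cplx.
Qed.

Lemma eps_opp x : eps (opp x) = Copp (eps x).
Proof. rewrite opp_smul, (proj2 Hlin). cplx. Qed.

Lemma eps_sub x y : eps (sub x y) = Csub (eps x) (eps y).
Proof. unfold sub. rewrite (proj1 Hlin), eps_opp. reflexivity. Qed.

Lemma eps_sc r x : eps (sc r x) = Cmul (RtoC r) (eps x).
Proof. apply (proj2 Hlin). Qed.

Lemma sub_sub_self (x w : A) : sub x (sub x w) = w.
Proof. unfold sub. rewrite opp_add, opp_opp, add_assoc, add_opp, add_0l. reflexivity. Qed.


Lemma approx_unit (y : A) : eps y = C0 -> forall ep, 0 < ep ->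
  exists e, eps e = C0 /\ star e = e /\ norm e <= 2 /\ norm (sub y (mul e y)) <= ep.
Proof.
  intros Hy ep Hep.
  destruct (Req_dec (norm y) 0) as [Hy0|Hy0].
  { apply norm_eq0 in Hy0. subst y. exists zero. split; [|split; [|split]].
    - apply eps_zero.
    - apply star_zero.
    - rewrite norm_zero; lra.
    - rewrite mul_0r, sub_diag, norm_zero; lra. }
  pose proof (norm_nonneg y) as Hyn.
  set (s := 2 * norm y). assert (Hs : 0 < s) by (unfold s; lra).
  set (t := 1 / s). set (y' := sc t y).
  assert (Hy'n : norm y' = 1/2).
  { unfold y'. rewrite norm_sc, Rabs_right. unfold t, s. field. lra.
    apply Rle_ge, Rlt_le; unfold t; apply Rdiv_lt_0_compat; lra. }
  assert (Hyy : y = sc s y').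
  { unfold y', sc. rewrite smul_smul. replace (Cmul (RtoC s) (RtoC t)) with C1.
    symmetry; apply smul_one. cplx. unfold t; field; lra. }
  assert (Hey' : eps y' = C0) by (unfold y'; rewrite eps_sc, Hy; cplx).
  set (h := mul y' (star y')).
  assert (Hhs : star h = h) by (unfold h; rewrite star_mul, star_star; reflexivity).
  assert (Hhn : norm h = 1/4) by (unfold h; rewrite norm_cstar', Hy'n; field).
  assert (Heh : eps h = C0) by (unfold h; rewrite Hmul, Hey'; cplx).
  set (Y := mul h h).
  assert (HYs : star Y = Y) by (unfold Y; rewrite star_mul, Hhs; reflexivity).
  assert (HYn : norm Y <= 1/16).
  { unfold Y. eapply Rle_trans. apply norm_mul. rewrite Hhn. lra. }
  destruct (sqrt_main Y HYs (1/16) HYn ltac:(lra)) as [z [Hz1 [Hz2 Hz3]]].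
  assert (Hhz : mul h z = mul z h) by (apply Hz3; unfold Y; apply mul_assoc).
  set (S2 := fun x => x = h \/ x = z).
  assert (S2c : forall x y, S2 x -> S2 y -> mul x y = mul y x).
  { unfold S2; intros x1 y1 [->| ->] [->| ->]; auto. }
  assert (S2s : forall x, S2 x -> star x = x) by (unfold S2; intros x1 [->| ->]; auto).
  set (th := exist (gen S2) h (g_base S2 h (or_introl eq_refl))).
  set (tz := exist (gen S2) z (g_base S2 z (or_intror eq_refl))).
  assert (Hsum : tadd S2 (tmul S2 th th) (tmul S2 tz tz) = t1 S2).
  { apply teq. change (add (mul h h) (mul z z) = one).
    rewrite Hz2, add_comm. apply sub_add_cancel. }
  assert (Hzn : norm z <= 1).
  { assert (norm z * norm z <= 1).
    { apply (unitary_trick z h 1); auto. rewrite add_comm.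
      change (tval S2 (tadd S2 (tmul S2 th th) (tmul S2 tz tz)) = sc 1 one).
      rewrite Hsum, sc1_one. reflexivity. lra. }
    pose proof (norm_nonneg z). nra. }
  set (G := fun k => tval S2 (gk S2 tz k)).
  assert (HGn : forall k, norm (G k) <= 1).
  { induction k; unfold G in *; simpl. exact Hzn.
    eapply Rle_trans. apply norm_mul. pose proof (norm_nonneg (tval S2 (gk S2 tz k))). nra. }
  assert (HGs : forall k, star (G k) = G k).
  { intro k. apply (gen_sa S2 S2c S2s). exact (proj2_sig _). }
  assert (HGe : forall k, eps (mul (G k) (G k)) = C1).
  { induction k.
    - unfold G; simpl. rewrite Hz2, eps_sub, Hone. unfold Y. rewrite Hmul, Heh. cplx.
    - change (G (S k)) with (mul (G k) (G k)). rewrite Hmul, IHk. cplx. }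
  set (q4 := (ep / s) ^ 4).
  assert (Hq4 : 0 < q4) by (unfold q4; apply pow_lt; apply Rdiv_lt_0_compat; lra).
  destruct (pow_lt_1_zero (1/2) ltac:(rewrite Rabs_right; lra) q4 Hq4) as [k Hk].
  specialize (Hk k (le_n _)). rewrite Rabs_right in Hk by (apply Rle_ge, pow_le; lra).
  set (g := G k).
  assert (Hgs : star g = g) by apply HGs.
  assert (Hgn : norm g <= 1) by apply HGn.
  assert (HT5 : norm (tval S2 (ak S2 th tz k)) * norm (tval S2 (ak S2 th tz k)) <= 1).
  { apply (T5 _ (tval S2 (tadd S2 (Ek S2 th tz k) (tmul S2 (gk S2 tz k) (gk S2 tz k))))).
    - apply (gen_sa S2 S2c S2s). exact (proj2_sig _).
    - apply (sosT_SOS S2 S2c S2s). apply sT_add. apply (Ek_sos S2 S2c th tz Hsum). apply sT_sq.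
    - exact (f_equal (tval S2) (ak_identity S2 S2c th tz k)). }
  assert (Hak : tval S2 (ak S2 th tz k) = sc (sqrt (ck k)) (mul h g)).
  { change (mul (sc (sqrt (ck k)) one) (mul h g) = sc (sqrt (ck k)) (mul h g)).
    unfold sc. rewrite mul_smull, mul_onel. reflexivity. }
  rewrite Hak, norm_sc, Rabs_right in HT5 by (apply Rle_ge, sqrt_pos).
  assert (Hck : ck k * (norm (mul h g) * norm (mul h g)) <= 1).
  { replace (ck k) with (sqrt (ck k) * sqrt (ck k)) by (apply sqrt_sqrt, ck_pos). nra. }
  assert (Hhg : norm (mul h g) * norm (mul h g) <= (1/2) ^ k).
  { assert (Hc : ck k * (1/2) ^ k = 1).
    { unfold ck. rewrite <- Rpow_mult_distr. replace (2 * (1/2)) with 1 by lra. apply pow1. }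
    pose proof (pow_le (1/2) k ltac:(lra)).
    pose proof (norm_nonneg (mul h g)).
    assert (0 < ck k) by (unfold ck; apply pow_lt; lra).
    apply (Rmult_le_reg_l (ck k)); auto. rewrite Hc. exact Hck. }
  exists (sub one (mul g g)). split; [|split; [|split]].
  - rewrite eps_sub, Hone. unfold g; rewrite HGe. cplx.
  - rewrite star_sub, star_one, star_mul. rewrite Hgs. reflexivity.
  - eapply Rle_trans. apply norm_sub_le. pose proof (norm_one_le (A:=A)).
    pose proof (norm_mul A g g). pose proof (norm_nonneg g). nra.
  - rewrite mul_subl, mul_onel, sub_sub_self.
    rewrite Hyy. unfold sc at 1. rewrite mul_smulr. fold (sc s (mul (mul g g) y')).
    rewrite norm_sc, Rabs_right by lra.
    set (X := norm (mul (mul g g) y')).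
    assert (HX2 : X * X <= norm (mul h g)).
    { unfold X. rewrite <- norm_cstar'. rewrite star_mul, star_mul, Hgs.
      replace (mul (mul (mul g g) y') (mul (star y') (mul g g)))
        with (mul (mul g g) (mul (mul h g) g)).
      2: { unfold h. rewrite !mul_assoc. reflexivity. }
      eapply Rle_trans. apply norm_mul. eapply Rle_trans. apply Rmult_le_compat_l. apply norm_nonneg.
      apply norm_mul. pose proof (norm_mul A g g).
      pose proof (norm_nonneg g). pose proof (norm_nonneg (mul g g)). pose proof (norm_nonneg (mul h g)).
      assert (norm (mul g g) <= 1) by nra.
      assert (norm (mul h g) * norm g <= norm (mul h g)) by nra.
      nra. }
    assert (HX0 : 0 <= X) by apply norm_nonneg.
    assert (HX4 : X ^ 4 < q4).
    { pose proof (norm_nonneg (mul h g)).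
      assert (X ^ 4 = (X * X) * (X * X)) by ring. rewrite H0.
      assert ((X*X) * (X*X) <= norm (mul h g) * norm (mul h g)).
      { apply Rmult_le_compat; nra. }
      lra. }
    assert (X <= ep / s).
    { apply Rnot_lt_le; intro Hc. unfold q4 in HX4.
      assert (0 <= ep / s) by (apply Rlt_le, Rdiv_lt_0_compat; lra).
      assert ((ep / s) ^ 4 <= X ^ 4).
      { apply pow_incr. lra. }
      lra. }
    apply (Rmult_le_compat_l s) in H; [| lra].
    replace (s * (ep / s)) with ep in H by (field; lra). lra.
Qed.

End AU.

Section Neumann.
Context {A : CstarAlg}.
Variable a : A.
Hypothesis Ha : norm a < 1.

Fixpoint nseq n : A := match n with O => zero | S n => add one (mul a (nseq n)) end.

Lemma nstep (x y : A) : sub (add one (mul a x)) (add one (mul a y)) = mul a (sub x y).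
Proof. rewrite sub_add_add, sub_diag, add_0l, mul_subr. reflexivity. Qed.

Lemma nseq_diff n : norm (sub (nseq (S n)) (nseq n)) <= 1 * norm a ^ n.
Proof.
  pose proof (norm_nonneg a).
  induction n.
  - simpl. rewrite sub_zero_r, mul_0r, add_zero. pose proof (norm_one_le (A:=A)). lra.
  - change (norm (sub (add one (mul a (nseq (S n)))) (add one (mul a (nseq n)))) <= 1 * norm a ^ S n).
    rewrite nstep. replace (1 * norm a ^ S n) with (norm a * (1 * norm a ^ n)) by (simpl; ring).
    eapply Rle_trans. apply norm_mul. apply Rmult_le_compat_l; lra.
Qed.

Lemma neumann : exists l : A, l = add one (mul a l).
Proof.
  pose proof (norm_nonneg a).
  destruct (geo_lim nseq (norm a) 1 ltac:(lra) ltac:(lra) nseq_diff) as [l Hl].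
  exists l. apply sub_eq0. apply (norm_small_K _ (1 + norm a)). lra.
  intros e He. destruct (Hl e He) as [N HN].
  pose proof (HN N (le_n _)). pose proof (HN (S N) (le_S _ _ (le_n _))).
  rewrite <- (sub_add_sub l (nseq (S N))). eapply Rle_trans. apply norm_triangle.
  change (nseq (S N)) with (add one (mul a (nseq N))). rewrite nstep.
  eapply Rle_trans. apply Rplus_le_compat_l. apply norm_mul.
  rewrite norm_sub_sym. change (add one (mul a (nseq N))) with (nseq (S N)).
  assert (norm a * norm (sub (nseq N) l) <= norm a * e) by (apply Rmult_le_compat_l; lra).
  lra.
Qed.
End Neumann.

Definition Cinv (z : Cplx) : Cplx :=
  mkC (re z / (re z * re z + im z * im z)) (- im z / (re z * re z + im z * im z)).

Lemma Cmod_sq z : Cmod z * Cmod z = re z * re z + im z * im z.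
Proof. unfold Cmod. apply sqrt_sqrt. nra. Qed.

Lemma Cmod_mul a b : Cmod (Cmul a b) = Cmod a * Cmod b.
Proof.
  unfold Cmod. rewrite <- sqrt_mult by nra. f_equal. destruct a, b; simpl. ring.
Qed.

Section Eps.
Context {A : CstarAlg}.
Variable eps : A -> Cplx.
Hypothesis Hlin : is_linear eps.
Hypothesis Hmul : forall x y, eps (mul x y) = Cmul (eps x) (eps y).
Hypothesis Hone : eps one = C1.

Lemma eps_bound x : Cmod (eps x) <= norm x.
Proof.
  apply Rnot_lt_le; intro H.
  set (lam := eps x). pose proof (norm_nonneg x).
  assert (Hn2 : 0 < re lam * re lam + im lam * im lam).
  { rewrite <- Cmod_sq. fold lam in H. nra. }
  set (a := smul (Cinv lam) x).
  assert (Hci : Cmod (Cinv lam) * Cmod lam = 1).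
  { rewrite <- Cmod_mul. unfold Cmod. replace 1 with (sqrt 1) by apply sqrt_1. f_equal.
    unfold Cinv; simpl. field. lra. }
  assert (Han : norm a < 1).
  { unfold a. rewrite norm_smul. pose proof (Cmod_ge0 (Cinv lam)).
    fold lam in H. nra. }
  assert (Hea : eps a = C1).
  { unfold a. rewrite (proj2 Hlin). fold lam. unfold Cinv; cplx; field; lra. }
  destruct (neumann a Han) as [l Hl].
  assert (E : eps l = Cadd C1 (eps l)).
  { rewrite Hl at 1. rewrite (proj1 Hlin), Hmul, Hone, Hea. cplx. }
  apply (f_equal re) in E. simpl in E. lra.
Qed.


Lemma eps_sa_real h : star h = h -> im (eps h) = 0.
Proof.
  intro Hh.
  assert (Hw : forall t, re (eps h) * re (eps h) + (im (eps h) + t) * (im (eps h) + t)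
                  <= norm h * norm h + t * t).
  { intro t. set (w := add h (smul (mkC 0 t) one)).
    assert (Ew : eps w = mkC (re (eps h)) (im (eps h) + t)).
    { unfold w. rewrite (proj1 Hlin), (proj2 Hlin), Hone. cplx. }
    assert (Sw : star w = add h (smul (mkC 0 (-t)) one)).
    { unfold w. rewrite star_add, star_smul, star_one, Hh. reflexivity. }
    assert (Mw : mul (star w) w = add (mul h h) (sc (t * t) one)).
    { rewrite Sw. unfold w. rewrite mul_addl, !mul_addr, !mul_smull, !mul_smulr, smul_smul,
        mul_oner, mul_onel, mul_onel.
      rewrite <- add_assoc, (add_assoc _ (smul (mkC 0 t) h)), <- smul_addl.
      replace (Cadd (mkC 0 t) (mkC 0 (- t))) with C0 by cplx. rewrite smul_C0, add_0l.
      unfold sc. f_equal. f_equal. cplx. }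
    pose proof (eps_bound w) as B. rewrite Ew in B.
    assert (B2 : Cmod (mkC (re (eps h)) (im (eps h) + t)) * Cmod (mkC (re (eps h)) (im (eps h) + t))
                 <= norm w * norm w).
    { pose proof (Cmod_ge0 (mkC (re (eps h)) (im (eps h) + t))). nra. }
    rewrite Cmod_sq in B2. simpl in B2. rewrite <- norm_cstar, Mw in B2.
    pose proof (norm_triangle A (mul h h) (sc (t * t) one)).
    rewrite norm_sc, Rabs_right in H by nra. pose proof (norm_one_le (A:=A)).
    pose proof (norm_mul A h h). assert (0 <= t * t) by nra. nra. }
  set (b := im (eps h)). set (N := norm h * norm h). fold b in Hw. fold N in Hw.
  destruct (Req_dec b 0) as [Hb|Hb]; auto. exfalso.
  specialize (Hw ((N + 1) / (2 * b))).
  assert (2 * b * ((N + 1) / (2 * b)) = N + 1) by (field; auto).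
  pose proof (Rle_0_sqr (re (eps h))). pose proof (Rle_0_sqr b). unfold Rsqr in *. nra.
Qed.

Lemma eps_star x : eps (star x) = Cconj (eps x).
Proof.
  set (iC := mkC 0 1).
  pose proof (eps_sa_real (add x (star x))) as H1.
  rewrite star_add, star_star, add_comm in H1. specialize (H1 eq_refl).
  pose proof (eps_sa_real (smul iC (sub x (star x)))) as H2.
  assert (star (smul iC (sub x (star x))) = smul iC (sub x (star x))).
  { rewrite star_smul, star_sub, star_star, (sub_anti (star x) x), opp_smul, smul_smul.
    f_equal. unfold iC; cplx. }
  specialize (H2 H). rewrite (proj1 Hlin) in H1. rewrite (proj2 Hlin), (eps_sub eps Hlin) in H2.
  unfold iC in H2. simpl in H1, H2.
  apply Ceq; simpl; lra.
Qed.

End Eps.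

Lemma Cmod_conj z : Cmod (Cconj z) = Cmod z.
Proof. unfold Cmod; simpl. f_equal. ring. Qed.

Lemma re_mul_bound a b : Rabs (re (Cmul a b)) <= Cmod a * Cmod b.
Proof. rewrite <- Cmod_mul. apply Cmod_re. Qed.

Lemma im_mul_bound a b : Rabs (im (Cmul a b)) <= Cmod a * Cmod b.
Proof. rewrite <- Cmod_mul. apply Cmod_im. Qed.

Lemma lim_zero a K : 0 <= K -> (forall e, 0 < e -> Rabs a <= K * e) -> a = 0.
Proof.
  intros HK H. destruct (Req_dec a 0); auto. exfalso.
  assert (Ha : 0 < Rabs a) by (apply Rabs_pos_lt; auto).
  specialize (H (Rabs a / (2 * (K + 1)))).
  assert (0 < Rabs a / (2 * (K+1))) by (apply Rdiv_lt_0_compat; lra).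
  specialize (H H1).
  assert (K * (Rabs a / (2 * (K + 1))) < Rabs a).
  { apply (Rmult_lt_reg_r (2 * (K+1))). lra.
    replace (K * (Rabs a / (2 * (K + 1))) * (2 * (K + 1))) with (K * Rabs a) by (field; lra). nra. }
  lra.
Qed.

Lemma lim_ge a b K : 0 <= K -> (forall e, 0 < e -> b - K * e <= a) -> b <= a.
Proof.
  intros HK H. apply Rnot_lt_le; intro Hc.
  specialize (H ((b - a) / (2 * (K + 1)))).
  assert (0 < (b - a) / (2 * (K+1))) by (apply Rdiv_lt_0_compat; lra).
  specialize (H H0).
  assert (K * ((b - a) / (2 * (K + 1))) < b - a).
  { apply (Rmult_lt_reg_r (2 * (K+1))). lra.
    replace (K * ((b - a) / (2 * (K + 1))) * (2 * (K + 1))) with (K * (b - a)) by (field; lra). nra. }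
  lra.
Qed.

Section Main.
Context {A : CstarAlg}.

Lemma expand1 (y : A) (c : Cplx) :
  mul (star (add (smul c one) y)) (add (smul c one) y) =
  add (add (smul (Cmul (Cconj c) c) one) (smul (Cconj c) y)) (add (smul c (star y)) (mul (star y) y)).
Proof.
  rewrite star_add, star_smul, star_one, mul_addl, !mul_addr, !mul_smull, !mul_smulr,
    !mul_onel, mul_oner, smul_smul. reflexivity.
Qed.

Lemma expand2 (y e : A) (c : Cplx) : star e = e ->
  mul (star (add y (smul c e))) (add y (smul c e)) =
  add (add (mul (star y) y) (smul c (mul (star y) e)))
      (add (smul (Cconj c) (mul e y)) (smul (Cmul (Cconj c) c) (mul e e))).
Proof.
  intro He. rewrite star_add, star_smul, He, mul_addl, !mul_addr, !mul_smull, !mul_smulr, smul_smul.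
  reflexivity.
Qed.

End Main.

Section KL.
Context {A : CstarAlg}.
Variables eps u : A -> Cplx.
Hypothesis Hlin : is_linear eps.
Hypothesis Hmul : forall x y, eps (mul x y) = Cmul (eps x) (eps y).
Hypothesis Hone : eps one = C1.
Hypothesis Hul : is_linear u.
Variable M : R.
Hypothesis HM0 : 0 <= M.
Hypothesis HM : forall x, Cmod (u x) <= M * norm x.
Hypothesis Hpos : forall x : A, eps (mul (star x) x) = C0 -> Cnonneg (u (mul (star x) x)).

Lemma KL (y : A) (Hy : eps y = C0) (lam : Cplx) :
  im (Cadd (Cmul (Cconj lam) (u y)) (Cmul lam (u (star y)))) = 0 /\
  - 4 * M * (re lam * re lam + im lam * im lam) <=
    re (Cadd (Cmul (Cconj lam) (u y)) (Cmul lam (u (star y)))) + re (u (mul (star y) y)).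
Proof.
  set (n2 := re lam * re lam + im lam * im lam).
  assert (Hn2 : 0 <= n2) by (unfold n2; nra).
  set (P := Cadd (Cmul (Cconj lam) (u y)) (Cmul lam (u (star y)))).
  assert (Fyy : Cnonneg (u (mul (star y) y))).
  { apply Hpos. rewrite Hmul, Hy. cplx. }
  destruct Fyy as [Fyy1 Fyy2].
  set (K := 2 * Cmod lam * M).
  assert (HK : 0 <= K) by (unfold K; pose proof (Cmod_ge0 lam); nra).
  assert (Main : forall ep, 0 < ep ->
     Rabs (im P) <= K * ep /\ - 4 * M * n2 - K * ep <= re P + re (u (mul (star y) y))).
  { intros ep Hep.
    destruct (approx_unit eps Hlin Hmul Hone y Hy ep Hep) as [e [He0 [Hes [Hen Herr]]]].
    set (z := add y (smul lam e)).
    assert (Hz0 : eps (mul (star z) z) = C0).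
    { rewrite Hmul. unfold z. rewrite (proj1 Hlin), (proj2 Hlin), Hy, He0. cplx. }
    pose proof (Hpos z Hz0) as Hz. unfold z in Hz. rewrite expand2 in Hz by auto.
    rewrite !(proj1 Hul), !(proj2 Hul) in Hz.
    assert (He2 : Cnonneg (u (mul e e))).
    { rewrite <- Hes at 1. apply Hpos. rewrite Hmul, He0. cplx. }
    destruct He2 as [He21 He22].
    assert (HB : re (u (mul e e)) <= 4 * M).
    { pose proof (Cmod_re (u (mul e e))). pose proof (HM (mul e e)).
      pose proof (norm_mul A e e). pose proof (norm_nonneg e).
      assert (norm (mul e e) <= 4) by nra.
      assert (M * norm (mul e e) <= M * 4) by (apply Rmult_le_compat_l; lra).
      pose proof (Rle_abs (re (u (mul e e)))). lra. }
    set (w1 := sub y (mul e y)).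
    assert (Hw2 : star w1 = sub (star y) (mul (star y) e)).
    { unfold w1. rewrite star_sub, star_mul, Hes. reflexivity. }
    assert (Eu1 : u y = Cadd (u (mul e y)) (u w1)).
    { pose proof (eps_sub u Hul y (mul e y)) as E. fold w1 in E. rewrite E. cplx. }
    assert (Eu2 : u (star y) = Cadd (u (mul (star y) e)) (u (star w1))).
    { pose proof (eps_sub u Hul (star y) (mul (star y) e)) as E. rewrite <- Hw2 in E. rewrite E. cplx. }
    assert (Bw1 : Cmod (u w1) <= M * ep).
    { eapply Rle_trans. apply HM. apply Rmult_le_compat_l; auto. }
    assert (Bw2 : Cmod (u (star w1)) <= M * ep).
    { eapply Rle_trans. apply HM. rewrite norm_star. apply Rmult_le_compat_l; auto. }
    set (A1 := u (mul (star y) e)) in *. set (A2 := u (mul e y)) in *.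
    set (B := u (mul e e)) in *. set (U := u (mul (star y) y)) in *.
    set (c1 := Cmul (Cconj lam) (u w1)). set (c2 := Cmul lam (u (star w1))).
    assert (EP : P = Cadd (Cadd (Cmul (Cconj lam) A2) (Cmul lam A1)) (Cadd c1 c2)).
    { unfold P, c1, c2. rewrite Eu1, Eu2. cplx. }
    assert (Hc1 : Rabs (re c1) <= Cmod lam * (M * ep) /\ Rabs (im c1) <= Cmod lam * (M * ep)).
    { unfold c1. rewrite <- (Cmod_conj lam). pose proof (Cmod_ge0 (Cconj lam)). split.
      eapply Rle_trans. apply re_mul_bound. apply Rmult_le_compat_l; auto.
      eapply Rle_trans. apply im_mul_bound. apply Rmult_le_compat_l; auto. }
    assert (Hc2 : Rabs (re c2) <= Cmod lam * (M * ep) /\ Rabs (im c2) <= Cmod lam * (M * ep)).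
    { unfold c2. pose proof (Cmod_ge0 lam). split.
      eapply Rle_trans. apply re_mul_bound. apply Rmult_le_compat_l; auto.
      eapply Rle_trans. apply im_mul_bound. apply Rmult_le_compat_l; auto. }
    destruct Hz as [Hz1 Hz2].
    rewrite EP. clear EP. 
    destruct Hc1 as [Hc1a Hc1b]. destruct Hc2 as [Hc2a Hc2b].
    revert Hz1 Hz2 Hc1a Hc1b Hc2a Hc2b. 
    destruct lam as [lr li]. destruct A1 as [a1r a1i]. destruct A2 as [a2r a2i].
    destruct B as [br bi]. destruct U as [ur ui]. destruct c1 as [c1r c1i]. destruct c2 as [c2r c2i].
    unfold K, n2. simpl in *. intros.
    assert (E0 : lr * li + - li * lr = 0) by ring.
    rewrite E0, Fyy1, He21 in Hz1. rewrite E0, He21 in Hz2.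
    set (CM := Cmod {| re := lr; im := li |} * (M * ep)) in *.
    assert (Hp : (lr * lr - - li * li) * br <= (lr * lr + li * li) * (4 * M)).
    { replace (lr * lr - - li * li) with (lr * lr + li * li) by ring.
      apply Rmult_le_compat_l; nra. }
    split.
    + replace (lr * a2i + - li * a2r + (lr * a1i + li * a1r) + (c1i + c2i)) with (c1i + c2i) by lra.
      eapply Rle_trans. apply Rabs_triang. unfold CM in *. lra.
    + pose proof (Rle_abs (- c1r)). pose proof (Rle_abs (- c2r)). rewrite Rabs_Ropp in *.
      unfold CM in *. lra. }
  split.
  - apply (lim_zero _ K HK). intros e He. apply (Main e He).
  - apply (lim_ge _ _ K HK). intros e He. apply (Main e He).
Qed.

End KL.

Theorem proposition3p2 (A : CstarAlg) (eps : A -> Cplx) (u : A -> Cplx) :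
  is_character eps ->
  is_linear u -> is_bounded u -> (exists x, u x <> C0) ->
  u one = C0 ->
  (forall x : A, eps (mul (star x) x) = C0 -> Cnonneg (u (mul (star x) x))) ->
  exists r : R, 0 < r /\
    exists v : A -> Cplx, is_state v /\
      forall x : A, u x = Cmul (RtoC r) (Csub (v x) (eps x)).
Proof.
  intros [Hlin [Hmul [x0 Hx0]]] Hul [M HM] _ Hu1 Hpos.
  assert (Hone : eps one = C1).
  { pose proof (f_equal eps (mul_onel A x0)) as E. rewrite Hmul in E.
    destruct (eps one) as [a b]. destruct (eps x0) as [c d]. simpl in E.
    injection E; intros E2 E1.
    assert (Hcd : c * c + d * d <> 0).
    { intro H0. apply Hx0. assert (c = 0) by nra. assert (d = 0) by nra. subst. reflexivity. }
    assert (Ha : (a - 1) * (c * c + d * d) = 0).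
    { replace ((a - 1) * (c * c + d * d)) with (c * (a * c - b * d - c) + d * (a * d + b * c - d)) by ring.
      rewrite E1, E2. ring. }
    assert (Hb : b * (c * c + d * d) = 0).
    { replace (b * (c * c + d * d)) with (- d * (a * c - b * d - c) + c * (a * d + b * c - d)) by ring.
      rewrite E1, E2. ring. }
    apply Rmult_integral in Ha. apply Rmult_integral in Hb.
    destruct Ha as [Ha|Ha]; [|contradiction]. destruct Hb as [Hb|Hb]; [|contradiction].
    apply Ceq; simpl; lra. }
  set (M' := Rabs M).
  assert (HM0 : 0 <= M') by apply Rabs_pos.
  assert (HM' : forall x, Cmod (u x) <= M' * norm x).
  { intro x. eapply Rle_trans. apply HM. apply Rmult_le_compat_r. apply norm_nonneg. apply Rle_abs. }
  set (r := 4 * M' + 1).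
  assert (Hr : 0 < r) by (unfold r; lra).
  set (v := fun x => Cadd (eps x) (Cmul (RtoC (1 / r)) (u x))).
  exists r. split; auto. exists v. split.
  - split; [|split].
    + split.
      * intros x y. unfold v. rewrite (proj1 Hlin), (proj1 Hul). cplx.
      * intros a x. unfold v. rewrite (proj2 Hlin), (proj2 Hul). cplx.
    + intro x. set (lam := eps x). set (y := sub x (smul lam one)).
      assert (Hx : x = add (smul lam one) y) by (unfold y; rewrite add_comm, sub_add_cancel; reflexivity).
      assert (Hy : eps y = C0).
      { unfold y. rewrite (eps_sub eps Hlin), (proj2 Hlin), Hone. fold lam. cplx. }
      destruct (KL eps u Hlin Hmul Hone Hul M' HM0 HM' Hpos y Hy lam) as [K1 K2].
      assert (Fyy : Cnonneg (u (mul (star y) y))).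
      { apply Hpos. rewrite Hmul, Hy. cplx. }
      destruct Fyy as [Fy1 Fy2].
      assert (Ee : eps (mul (star x) x) = Cmul (Cconj lam) lam).
      { rewrite Hmul, (eps_star eps Hlin Hmul Hone). reflexivity. }
      pose proof (expand1 y lam) as Ex. rewrite <- Hx in Ex.
      unfold v. rewrite Ee, Ex, !(proj1 Hul), !(proj2 Hul), Hu1.
      revert K1 K2 Fy1 Fy2.
      set (U := u (mul (star y) y)). set (Q1 := u y). set (Q2 := u (star y)).
      destruct lam as [lr li]. destruct U as [ur ui]. destruct Q1 as [q1r q1i].
      destruct Q2 as [q2r q2i]. simpl. intros K1 K2 Fy1 Fy2.
      unfold Cnonneg. simpl. split.
      * match goal with |- ?L = 0 =>
          transitivity ((1/r) * ((lr * q1i + - li * q1r + (lr * q2i + li * q2r)) + ui)) end.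
        ring. rewrite K1, Fy1. ring.
      * match goal with |- 0 <= ?L =>
          replace L with ((lr*lr + li*li) + (1/r) * ((lr * q1r - - li * q1i + (lr * q2r - li * q2i)) + ur)) by ring end.
        set (X := lr * q1r - - li * q1i + (lr * q2r - li * q2i) + ur) in *.
        set (n2 := lr * lr + li * li) in *.
        assert (Hn2 : 0 <= n2) by (unfold n2; nra).
        assert (Ht : 0 < 1 / r) by (apply Rdiv_lt_0_compat; lra).
        assert (H1 : (1 / r) * X >= (1 / r) * (-4 * M' * n2)).
        { apply Rle_ge, Rmult_le_compat_l; lra. }
        assert (H2 : (1 / r) * (4 * M' * n2) <= n2).
        { replace ((1 / r) * (4 * M' * n2)) with (n2 * (4 * M') / r) by (field; lra).
          apply (Rmult_le_reg_r r); auto. replace (n2 * (4 * M') / r * r) with (n2 * (4 * M')) by (field; lra).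
          unfold r. nra. }
        lra.
    + unfold v. rewrite Hone, Hu1. cplx.
  - intro x. unfold v. apply Ceq; simpl; field; lra.
Qed.
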